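(* Let $\delta$ be $\mathfrak l_m$-dominant integral, $k\ge k'$ non-negative integers, $K\in\kappa(\delta,k)$, $K'\in\kappa(\delta,k')$, $K\ne K'$, and suppose $\chi_{\delta+\lambda_K}=\chi_{\delta+\lambda_{K'}}$ (so that $i:=i(\delta,k)$ is defined). Then there exists an $\mathfrak a_m$-dominant $\mathfrak a_m$-integral weight $\mu$ such that $\delta+\lambda_K=\mu[i-1]$ and $\delta+\lambda_{K'}=\mu[i]$.
   Context: $\mathfrak a_m\cong\mathfrak{sl}_{m+1}$ is the projective subalgebra $\mathrm{Span}\{\partial_{x_i},x_j\partial_{x_i},x_j\sum_rx_r\partial_{x_r}\}$ of polynomial vector fields on $\mathbb R^m$, with Cartan subalgebra $\mathfrak h_m=\mathrm{Span}\{x_i\partial_{x_i}\}$. Weights: $\mathfrak h_m^*=\{\lambda=\sum_{i=0}^m\lambda_i\epsilon_i:\sum\lambda_i=0\}$ with $\lambda(x_j\partial_{x_j})=\lambda_j$ ($1\le j\le m$). $\lambda$ is $\mathfrak a_m$-dominant integral if $\lambda_i-\lambda_{i+1}\in\mathbb N$ for $0\le i<m$, and $\mathfrak l_m$-dominant integral if this holds for $1\le i<m$. Let $\rho=\sum_{i=0}^m(\tfrac m2-i)\epsilon_i$; $S_{m+1}$ permutes indices $0,\dots,m$, $w\cdot\lambda=w(\lambda+\rho)-\rho$; $\chi_\lambda$ is the $\mathfrak a_m$-infinitesimal character attached to $\lambda$, with $\chi_\lambda=\chi_{\lambda'}$ iff $\lambda'\in S_{m+1}\cdot\lambda$. For $\mu\in\mathfrak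 h_m^*$, $\mu[0]=\mu$ and for $1\le i\le m$, $\mu[i]=w_i\cdot\mu$ where, writing $\sigma=\mu+\rho$, $\mu[i]+\rho=(\sigma_i,\sigma_0,\sigma_1,\dots,\sigma_{i-1},\sigma_{i+1},\dots,\sigma_m)$. For $K\in\mathbb N^m$: $|K|=\sum K_i$, $\lambda_K=|K|\epsilon_0-\sum_{i=1}^mK_i\epsilon_i$, $\kappa(\delta,k)=\{K\in\mathbb N^m:|K|=k,\ K_i\le\delta_i-\delta_{i+1}\text{ for }i<m\}$. For $\delta$: $i(\delta)\in\{1,\dots,m\}$ maximal with $\delta_1=\cdots=\delta_{i(\delta)}$; $\tilde\delta_i=\delta_i-i-\delta_0$; $\delta$ is resonant if $\tilde\delta_{i(\delta)}\in\mathbb Z^+$; for $\delta$ resonant, $k\in\mathbb Z^+$, $\tilde\delta_{i(\delta)}\ge k$, $i(\delta,k)\in\{i(\delta),\dots,m\}$ is maximal with $\tilde\delta_{i(\delta,k)}\ge k$. *)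

(* Defs.v *)
From HB Require Import structures.
From mathcomp Require Import all_boot all_order all_algebra all_fingroup.
Set Implicit Arguments. Unset Strict Implicit. Unset Printing Implicit Defensive.
Import Order.TTheory GRing.Theory Num.Theory.
Local Open Scope ring_scope.

(* Weights of a_m = sl_(m+1): lambda = sum_{i=0}^m lambda_i eps_i, represented
   by the coefficient vector lambda : 'I_(m+1) -> R, R a numeric closed field
   (e.g. the complex numbers); the constraint sum lambda_i = 0 is [is_weight]. *)
Definition weight (R : numClosedFieldType) (m : nat) := {ffun 'I_m.+1 -> R}.

Section Defs.
Variables (R : numClosedFieldType) (m : nat).
Implicit Types (lam mu del : weight R m).

Definition is_weight lam : Prop := \sum_(i < m.+1) lam i = 0.

Definition co lam (i : nat) : R := lam (inord i).

Definition isN (x : R) : Prop := exists n : nat, x = n%:R.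
Definition isZpos (x : R) : Prop := exists n : nat, x = n.+1%:R.

Definition rho : weight R m := [ffun i : 'I_m.+1 => m%:R / 2 - (i : nat)%:R].

Definition a_dom_int lam : Prop := forall i : nat, (i < m)%N -> isN (co lam i - co lam i.+1).
Definition l_dom_int lam : Prop :=
  forall i : nat, (0 < i)%N -> (i < m)%N -> isN (co lam i - co lam i.+1).

Definition dot (w : 'S_m.+1) lam : weight R m :=
  [ffun j : 'I_m.+1 => lam (w j) + rho (w j) - rho j].

(* chi_lam = chi_lam'  iff  lam' in S_(m+1) . lam *)
Definition same_infchar lam lam' : Prop := exists w : 'S_m.+1, lam' = dot w lam.

(* mu[i]: mu[i] + rho = (s_i, s_0, ..., s_(i-1), s_(i+1), ..., s_m), s = mu + rho *)
Definition shift mu (i : nat) : weight R m :=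
  [ffun j : 'I_m.+1 =>
     let s t := co mu t + co rho t in
     (if (j : nat) == 0%N then s i else if (j <= i)%N then s (j : nat).-1 else s j)
     - rho j].

(* K in N^m, K = (K_1, ..., K_m) stored as a tuple, K_i = nth 0 K (i-1) *)
Definition Kc (K : m.-tuple nat) (i : nat) : nat := nth 0%N K i.-1.

Definition lamK (K : m.-tuple nat) : weight R m :=
  [ffun j : 'I_m.+1 => if (j : nat) == 0%N then (sumn K)%:R else - (Kc K j)%:R].

Definition in_kappa del (k : nat) (K : m.-tuple nat) : Prop :=
  sumn K = k /\
  forall i : nat, (0 < i)%N -> (i < m)%N -> (Kc K i)%:R <= co del i - co del i.+1.

Definition i_del del : nat :=
  \max_(i < m.+1 | (0 < i)%N &&
        [forall j : 'I_m.+1, ((0 < j)%N && (j <= i)%N) ==> (del j == co del 1)]) i.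

Definition tilde del (i : nat) : R := co del i - i%:R - co del 0.

Definition resonant del : Prop := isZpos (tilde del (i_del del)).

(* i(del,k): maximal i in {i(del), ..., m} with tilde del_i >= k
   (meaningful when del resonant, k in Z^+, tilde del_(i(del)) >= k) *)
Definition i_delk del (k : nat) : nat :=
  \max_(i < m.+1 | (i_del del <= i)%N && (k%:R <= tilde del i)) i.

End Defs.

(* Main.v *)
Require Import Defs.
From HB Require Import structures.
From mathcomp Require Import all_boot all_order all_algebra all_fingroup.
From mathcomp Require Import ring zify.
Import Order.TTheory GRing.Theory Num.Theory.
Local Open Scope ring_scope.

Lemma natr_inj (R : numDomainType) (a b : nat) : a%:R = b%:R :> R -> a = b.
Proof. by move/eqP; rewrite eqr_nat => /eqP. Qed.

Lemma eq_via (R : comPzRingType) (a b x y : R) : a = b -> x - y = a - b -> x = y.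
Proof. by move=> -> /eqP; rewrite subrr subr_eq0 => /eqP. Qed.

Arguments eq_via {R a b x y}.

Lemma eq_via2 (R : comPzRingType) (a b c d x y : R) : a = b -> c = d ->
  x - y = (a - b) + (c - d) -> x = y.
Proof. by move=> -> -> /eqP; rewrite !subrr addr0 subr_eq0 => /eqP. Qed.

Arguments eq_via2 {R a b c d x y}.

Lemma coE (R : numClosedFieldType) m (F : weight R m) (t : 'I_m.+1) : co F t = F t.
Proof. by rewrite /co inord_val. Qed.

Lemma FK (R : numClosedFieldType) m (del : weight R m) (K : m.-tuple nat) t :
  (0 < t)%N -> (t <= m)%N -> co (del + lamK R K) t = co del t - (Kc K t)%:R.
Proof.
move=> t0 tm; rewrite /co !ffunE inordK //.
by case: t t0 {tm}.
Qed.

Lemma FK0 (R : numClosedFieldType) m (del : weight R m) (K : m.-tuple nat) :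
  co (del + lamK R K) 0 = co del 0 + (sumn K)%:R.
Proof. by rewrite /co !ffunE inordK. Qed.

Lemma rhoE (R : numClosedFieldType) m t : (t <= m)%N ->
  co (rho R m) t = m%:R / 2 - t%:R.
Proof. by move=> tm; rewrite /co ffunE inordK. Qed.

Lemma LD (R : numClosedFieldType) m (del : weight R m) (hl : l_dom_int del) s t :
  (0 < s)%N -> (s <= t)%N -> (t <= m)%N ->
  exists N : nat, co del s - co del t = N%:R /\
   ((s < t)%N -> forall e : nat, co del s - co del s.+1 = e%:R -> (e <= N)%N).
Proof.
move=> s0; elim: t => [|t IH]; first by rewrite leqn0 => /eqP s00; rewrite s00 in s0.
rewrite leq_eqVlt => /orP[/eqP <- _|st tm].
  by exists 0%N; rewrite subrr; split=> //; rewrite ltnn.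
have [N [HN HN2]] := IH st (ltnW tm).
have [e' He'] := hl t (leq_trans s0 st) tm.
exists (N + e')%N; split.
  by rewrite natrD -HN -He'; ring.
move=> _ e He; case: (ltngtP s t) => st'.
- by have := HN2 st' e He; lia.
- by move: st; rewrite ltnS leqNgt st'.
- subst s; rewrite He in He'; move/natr_inj: He' => ->; lia.
Qed.
Lemma IL (R : numClosedFieldType) m (del : weight R m) (hl : l_dom_int del)
  k1 k2 (K1 K2 : m.-tuple nat) :
  in_kappa del k1 K1 -> in_kappa del k2 K2 -> forall s t : nat,
  (0 < s)%N -> (s <= m)%N -> (0 < t)%N -> (t <= m)%N ->
  co del t - (Kc K1 t)%:R - t%:R = co del s - (Kc K2 s)%:R - s%:R -> s = t.
Proof.
move=> [_ hK1] [_ hK2] s t s0 sm t0 tm H.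
case: (ltngtP s t) => // st.
- have [N [HN HN2]] := @LD _ _ _ hl _ _ s0 (ltnW st) tm.
  have [e He] := hl s s0 (leq_trans st tm).
  have := HN2 st e He.
  have := hK2 s s0 (leq_trans st tm); rewrite He ler_nat => h1 h2.
  have : (N + Kc K1 t + t)%:R = (Kc K2 s + s)%:R :> R.
    apply: (eq_via (esym H)); rewrite !natrD -HN; ring.
  move/natr_inj; lia.
- have [N [HN HN2]] := @LD _ _ _ hl _ _ t0 (ltnW st) sm.
  have [e He] := hl t t0 (leq_trans st sm).
  have := HN2 st e He.
  have := hK1 t t0 (leq_trans st sm); rewrite He ler_nat => h1 h2.
  have : (N + Kc K2 s + s)%:R = (Kc K1 t + t)%:R :> R.
    apply: (eq_via H); rewrite !natrD -HN; ring.
  move/natr_inj; lia.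
Qed.

Lemma AB (R : numClosedFieldType) m (del : weight R m) (K1 K2 : m.-tuple nat) x y :
  (0 < x)%N -> (x <= m)%N -> (0 < y)%N -> (y <= m)%N ->
  co (del + lamK R K1) x + co (rho R m) x = co (del + lamK R K2) y + co (rho R m) y ->
  co del x - (Kc K1 x)%:R - x%:R = co del y - (Kc K2 y)%:R - y%:R.
Proof.
move=> x0 xm y0 ym; rewrite !FK // !rhoE // => H.
apply: (eq_via H); ring.
Qed.

Lemma sum_lamK (R : numClosedFieldType) m (K : m.-tuple nat) :
  \sum_(j < m.+1) lamK R K j = 0.
Proof.
rewrite big_ord_recl !ffunE /=.
under eq_bigr => i _ do rewrite ffunE /= /Kc /=.
rewrite sumrN -natr_sum; apply/eqP; rewrite subr_eq0; apply/eqP; congr (_%:R).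
rewrite sumnE big_tuple; apply: eq_bigr => i _; exact: tnth_nth.
Qed.

Lemma pn_inj (p a b : nat) :
  (if (a < p)%N then a.+1 else if a == p then 0%N else a) =
  (if (b < p)%N then b.+1 else if b == p then 0%N else b) -> a = b.
Proof.
case: ifP => h1; case: ifP => h2; rewrite ?h1 ?h2;
  try (case: ifP => /eqP h3); try (case: ifP => /eqP h4); lia.
Qed.

Theorem mainTheorem12 (R : numClosedFieldType) (m : nat) (hm : (0 < m)%N)
  (del : weight R m) (k k' : nat) (K K' : m.-tuple nat) :
  is_weight del -> l_dom_int del ->
  (k' <= k)%N -> in_kappa del k K -> in_kappa del k' K' -> K <> K' ->
  same_infchar (del + lamK R K) (del + lamK R K') ->
  [/\ resonant del, (0 < k)%N, k%:R <= tilde del (i_del del) &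
      exists mu : weight R m,
        [/\ is_weight mu, a_dom_int mu,
            del + lamK R K = shift mu (i_delk del k).-1 &
            del + lamK R K' = shift mu (i_delk del k)]].
Proof.
move=> hw hl hkk hK hK' hne [w hwE].
set A := fun t => co (del + lamK R K) t + co (rho R m) t.
set B := fun t => co (del + lamK R K') t + co (rho R m) t.
set wn := fun j : nat => nat_of_ord (w (inord j)).
have wnm j : (wn j <= m)%N by rewrite /wn -ltnS ltn_ord.
have HB j : (j <= m)%N -> B j = A (wn j).
  move=> jm; rewrite /B /A /wn hwE /co /dot ffunE !inord_val; ring.
have wninj i j : (i <= m)%N -> (j <= m)%N -> wn i = wn j -> i = j.
  move=> im jm /val_inj /perm_inj /(congr1 (@nat_of_ord _)); rewrite !inordK //.
have [q [q0 qm hq]] : exists q, [/\ (0 < q)%N, (q <= m)%N & Kc K q <> Kc K' q].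
  case: (boolP [exists j : 'I_m.+1, (0 < j)%N && (Kc K j != Kc K' j)]).
    move=> /existsP[j /andP[j0 /eqP hj]]; exists j; split=> //.
    by rewrite -ltnS ltn_ord.
  rewrite negb_exists => /forallP H; exfalso; apply: hne.
  apply: eq_from_tnth => i; rewrite !(tnth_nth 0%N).
  have := H (inord i.+1); rewrite inordK ?ltnS ?ltn_ord //= negbK => /eqP.
  by rewrite /Kc.
have ILAB x y : (0 < x)%N -> (x <= m)%N -> (0 < y)%N -> (y <= m)%N -> A x = B y -> x = y.
  move=> x0 xm y0 ym H; symmetry.
  exact: (@IL _ _ _ hl _ _ _ _ hK hK' y x y0 ym x0 xm (@AB _ _ del K K' x y x0 xm y0 ym H)).
have ILBA x y : (0 < x)%N -> (x <= m)%N -> (0 < y)%N -> (y <= m)%N -> B x = A y -> x = y.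
  move=> x0 xm y0 ym H; symmetry.
  exact: (@IL _ _ _ hl _ _ _ _ hK' hK y x y0 ym x0 xm (@AB _ _ del K' K x y x0 xm y0 ym H)).
have hKq : (Kc K q)%:R <> (Kc K' q)%:R :> R by move/natr_inj.
have w0 : wn 0%N = q.
  set j0 := nat_of_ord ((w^-1)%g (inord q)).
  have j0m : (j0 <= m)%N by rewrite -ltnS ltn_ord.
  have wj0 : wn j0 = q by rewrite /wn /j0 inord_val permKV inordK // ltnS.
  case: (posnP j0) => [j00|j0p]; first by rewrite -j00.
  exfalso; have := HB j0 j0m; rewrite wj0 => /esym H.
  have := ILAB _ _ q0 qm j0p j0m H => eqj; rewrite -eqj in H.
  move: H; rewrite /A /B !FK // => H; apply: hKq.
  apply: (eq_via (esym H)); ring.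
have wq : wn q = 0%N.
  case: (posnP (wn q)) => // wqp; exfalso.
  have := HB q qm => /esym H.
  have := ILAB _ _ wqp (wnm q) q0 qm H => eqq.
  have := wninj _ _ (leq0n m) qm; rewrite w0 eqq => /(_ erefl) q00.
  by rewrite -q00 in q0.
have E1 t : (0 < t)%N -> (t <= m)%N -> t <> q -> B t = A t.
  move=> t0 tm tq; rewrite HB //.
  case: (posnP (wn t)) => [wt0|wtp].
    by exfalso; apply: tq; apply: wninj => //; rewrite wq.
  by rewrite (ILAB _ _ wtp (wnm t) t0 tm (esym (HB t tm))).
have E2 : B q = A 0%N by rewrite HB // wq.
have E3 : B 0%N = A q by rewrite HB // w0.
have [sK sKb] := hK; have [sK' sK'b] := hK'.
have HE2 : tilde del q = (k + Kc K' q)%:R.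
  move: E2; rewrite /A /B /= FK // (FK0 _ _ del K) !rhoE // sK => E2.
  rewrite /tilde natrD; apply: (eq_via E2); ring.
have HE3 : tilde del q = (k' + Kc K q)%:R.
  move: E3; rewrite /A /B /= (FK0 _ _ del K') FK // !rhoE // sK' => E3.
  rewrite /tilde natrD; apply: (eq_via (esym E3)); ring.
have kk : (k + Kc K' q = k' + Kc K q)%N by apply: (@natr_inj R); rewrite -HE2 -HE3.
have k'k : (k' < k)%N.
  rewrite ltn_neqAle hkk andbT; apply/negP => /eqP ek; subst k'.
  by apply: hKq; congr (_%:R); lia.
have tq_lt i : (q < i)%N -> (i <= m)%N -> ~~ (k%:R <= tilde del i).
  move=> qi im.
  have [N [HN HN2]] := @LD _ _ _ hl _ _ q0 (ltnW qi) im.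
  have [e He] := hl q q0 (leq_trans qi im).
  have := HN2 qi e He.
  have := sK'b q q0 (leq_trans qi im); rewrite He ler_nat => h1 h2.
  have Hid : tilde del i + (N + (i - q))%:R = (k + Kc K' q)%:R.
    rewrite -HE2 !natrD natrB ?(ltnW qi) // -HN /tilde; ring.
  apply/negP => hki.
  have : (k + (N + (i - q)))%:R <= (k + Kc K' q)%:R :> R by rewrite -Hid natrD lerD2r.
  rewrite ler_nat; lia.
have tq_ge s : (0 < s)%N -> (s <= q)%N -> exists n, tilde del s = (k + Kc K' q + n)%:R.
  move=> s0 sq.
  have [N [HN _]] := @LD _ _ _ hl _ _ s0 sq qm.
  exists (N + (q - s))%N.
  rewrite natrD -HE2 !natrD natrB // -HN /tilde; ring.
have m1 : (1 < m.+1)%N by [].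
have id1 : (1 <= i_del del)%N.
  have := @leq_bigmax_cond _ (fun i : 'I_m.+1 => (0 < i)%N &&
        [forall j : 'I_m.+1, ((0 < j)%N && (j <= i)%N) ==> (del j == co del 1)])
        (fun i => nat_of_ord i) (inord 1).
  rewrite inordK //; apply; apply/andP; split=> //.
  apply/forallP => j; apply/implyP => /andP[j0 j1].
  have -> : j = inord 1 by apply: val_inj; rewrite /= inordK //; apply/eqP; rewrite eqn_leq j0 j1.
  by rewrite /co.
have id2 : (i_del del <= q)%N.
  apply/bigmax_leqP => i /andP[i0 /forallP Hi]; rewrite leqNgt; apply/negP => qi.
  have im : (i <= m)%N by rewrite -ltnS ltn_ord.
  have Hj j : (0 < j)%N -> (j <= i)%N -> co del j = co del 1.
    move=> j0 ji; have := Hi (inord j); rewrite /co inordK ?ltnS ?(leq_trans ji im) //.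
    by rewrite j0 ji /= => /eqP.
  have qm' : (q < m)%N := leq_trans qi im.
  have d0 : co del q - co del q.+1 = 0 by rewrite (Hj q) ?(ltnW qi) // (Hj q.+1) // subrr.
  have := sKb q q0 qm'; have := sK'b q q0 qm'; rewrite d0 !lern0 => /eqP h1 /eqP h2.
  by apply: hq; rewrite h1 h2.
have idk : i_delk del k = q.
  apply/eqP; rewrite eqn_leq; apply/andP; split.
    apply/bigmax_leqP => i /andP[_ hi]; rewrite leqNgt; apply/negP => qi.
    by have := tq_lt i qi; rewrite -ltnS ltn_ord hi => /(_ erefl).
  have := @leq_bigmax_cond _ (fun i : 'I_m.+1 => (i_del del <= i)%N && (k%:R <= tilde del i))
        (fun i => nat_of_ord i) (inord q).
  rewrite inordK ?ltnS //; apply; rewrite id2 HE2 /= ler_nat; apply: leq_addr.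
have [n Hn] := tq_ge _ id1 id2.
split.
- by exists (k.-1 + Kc K' q + n)%N; rewrite Hn; congr (_%:R); lia.
- by apply: leq_ltn_trans k'k.
- by rewrite Hn ler_nat -addnA leq_addr.
rewrite idk.
have q1m : (q.-1 <= m)%N by apply: leq_trans (leq_pred q) qm.
set sig := fun j : nat => if (j < q.-1)%N then A j.+1 else if j == q.-1 then A 0%N else A j.
have s1 t : (t < q.-1)%N -> sig t = A t.+1 by move=> h; rewrite /sig h.
have s2 : sig q.-1 = A 0%N by rewrite /sig ltnn eqxx.
have s3 t : (q.-1 < t)%N -> sig t = A t.
  by move=> h; rewrite /sig ltnNge (ltnW h) /= gtn_eqF.
set mu : weight R m := [ffun j : 'I_m.+1 => sig j - rho R m j].
have smu t : (t <= m)%N -> co mu t + co (rho R m) t = sig t.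
  by move=> tm; rewrite /co ffunE inordK ?ltnS // subrK.
have FA (j : 'I_m.+1) : (del + lamK R K) j = A j - rho R m j.
  by rewrite /A /= !coE addrK.
have FB (j : 'I_m.+1) : (del + lamK R K') j = B j - rho R m j.
  by rewrite /B /= !coE addrK.
have td t : (0 < t)%N -> (t < m)%N -> exists n : nat, A t - A t.+1 - 1 = n%:R.
  move=> t0 tm; have [e He] := hl t t0 tm.
  have := sKb t t0 tm; rewrite He ler_nat => hte.
  exists (e - Kc K t + Kc K t.+1)%N.
  rewrite /A /= !FK // ?(ltnW tm) // !rhoE // ?(ltnW tm) // natrD natrB // -He.
  rewrite -addn1 natrD; ring.
exists mu; split.
- rewrite /is_weight.
  have -> : \sum_(j < m.+1) mu j = \sum_(j < m.+1) sig j - \sum_(j < m.+1) rho R m j.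
    by rewrite -sumrB; apply: eq_bigr => j _; rewrite ffunE.
  pose pn := fun j : nat => if (j < q.-1)%N then j.+1 else if j == q.-1 then 0%N else j.
  have pnm j : (j <= m)%N -> (pn j < m.+1)%N.
    rewrite /pn => jm; case: ifP => h1; first by rewrite ltnS (leq_trans h1 q1m).
    by case: ifP.
  pose pi := fun j : 'I_m.+1 => (inord (pn j) : 'I_m.+1).
  have sigpi (j : 'I_m.+1) : sig j = A (pi j).
    rewrite /pi inordK; last by apply: pnm; rewrite -ltnS ltn_ord.
    rewrite /sig /pn; case: ifP => _; first reflexivity.
    by case: ifP => _.
  have piinj : injective pi.
    move=> x y; have xm : (x <= m)%N by rewrite -ltnS ltn_ord.
    have ym : (y <= m)%N by rewrite -ltnS ltn_ord.
    move/(congr1 (@nat_of_ord _)); rewrite /pi (inordK (pnm _ xm)) (inordK (pnm _ ym)).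
    by move=> h; apply: val_inj; apply: (@pn_inj q.-1).
  have -> : \sum_(j < m.+1) sig j = \sum_(j < m.+1) A j.
    rewrite (eq_bigr (fun j => A (pi j))); last by move=> j _; rewrite sigpi.
    by rewrite [RHS](reindex_inj piinj).
  rewrite -sumrB.
  have -> : \sum_(j < m.+1) (A j - rho R m j) = \sum_(j < m.+1) (del j + lamK R K j).
    by apply: eq_bigr => j _; rewrite /A /= !coE addrK ffunE.
  by rewrite big_split /= hw sum_lamK addr0.
- move=> i im.
  have cmu t : (t <= m)%N -> co mu t = sig t - co (rho R m) t.
    by move=> tm; rewrite -(smu t tm) addrK.
  rewrite !cmu ?(ltnW im) //.
  have -> : sig i - co (rho R m) i - (sig i.+1 - co (rho R m) i.+1) = sig i - sig i.+1 - 1.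
    rewrite !rhoE ?(ltnW im) //; ring.
  case: (ltngtP i.+1 q.-1) => h.
  + rewrite s1 ?s1 //; last lia.
    apply: td; lia.
  + case: (ltngtP i q.-1) => h2.
    * lia.
    * rewrite s3 // s3 //.
      apply: td; lia.
    * rewrite h2 s2 s3 // prednK //.
      rewrite -E3; exists (k - k'.+1)%N.
      rewrite /A /B /= (FK0 _ _ del K) (FK0 _ _ del K') !rhoE // sK sK' natrB //; ring.
  + rewrite s1; last lia.
    rewrite [X in sig X]h s2 -E2.
    have qe : q = i.+2 by lia.
    have i1m : (i.+1 < m)%N by lia.
    have [e He] := hl i.+1 erefl i1m.
    have := sKb i.+1 erefl i1m; rewrite He ler_nat => hte.
    exists (e - Kc K i.+1 + Kc K' q)%N.
    rewrite /A /B /= !FK ?qe ?(ltnW i1m) // !rhoE ?(ltnW i1m) // natrD natrB // -He.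
    ring.
- apply/ffunP => j; rewrite FA /shift !ffunE /=; congr (_ - _).
  have jm : (j <= m)%N by rewrite -ltnS ltn_ord.
  case: (posnP j) => [j0|jp].
    by rewrite j0 /= smu // s2.
  case: (leqP j q.-1) => hj.
    rewrite smu ?(leq_trans (leq_pred j) jm) // s1 ?prednK //; lia.
  by rewrite smu // s3.
- apply/ffunP => j; rewrite FB /shift !ffunE /=; congr (_ - _).
  have jm : (j <= m)%N by rewrite -ltnS ltn_ord.
  case: (posnP j) => [j0|jp].
    rewrite j0 /= smu // s3 -?E3 //; lia.
  case: (leqP j q) => hj.
    rewrite smu ?(leq_trans (leq_pred j) jm) //.
    case: (ltngtP j q) => hjq.
    + rewrite s1 ?prednK ?E1 //; [lia | lia].
    + lia.
    + by rewrite hjq s2 E2.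
  rewrite smu // s3 ?E1 //; lia.
Qed.
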